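(* For any $n\in\mathbb N^*$, any weight vector $\varpi$ for $\Gamma_n$ and any $\gamma\in\mathbb F^*$, the graph $\gamma\Gamma_n^\varpi$ has the Kahan-Poisson property.
   Context: $\mathbb F\in\{\mathbb R,\mathbb C\}$. A skew-symmetric graph is $\Gamma=(S,A)$, $S=\{1,\dots,n\}$, $A=(a_{i,j})$ skew-symmetric over $\mathbb F$. Its Poisson bracket on $\mathbb F(x)$ is $\{x_i,x_j\}=a_{i,j}x_ix_j$; its Kahan morphism (step size 1) is $K(x_i)=\tilde x_i$ with $\tilde x_i$ the unique solution of $\tilde x_i-x_i=\tilde x_i\sum_ja_{i,j}x_j+x_i\sum_ja_{i,j}\tilde x_j$; $\Gamma$ has the Kahan-Poisson property if $\{\tilde x_i,\tilde x_j\}=a_{i,j}\tilde x_i\tilde x_j$ for all $i,j$. $\Gamma_n$ has $a_{i,j}=1$ for $i<j$; $\gamma\Gamma=(S,\gamma A)$. A weight vector is $\varpi:S\to\mathbb N^*$ and the cloning $\Gamma^\varpi$ has vertices $(i,k)$, $1\le k\le\varpi(i)$, with $a^\varpi_{(i,k),(j,\ell)}=a_{i,j}$. *)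

(* Defs.v *)
From HB Require Import structures.
From mathcomp Require Import all_boot all_order all_algebra.
From mathcomp Require Import generic_quotient fraction.
From mathcomp Require Import mpoly.
From mathcomp Require Import complex.
From mathcomp Require Import reals.

Set Implicit Arguments.
Unset Strict Implicit.
Unset Printing Implicit Defensive.

Import GRing.Theory.
Local Open Scope ring_scope.

Section KahanPoisson.
Variables (F : fieldType) (N : nat).

Definition ratfun := {fraction {mpoly F[N]}}.

Definition xvar (k : 'I_N) : ratfun := tofrac ('X_k : {mpoly F[N]}).
Definition cst (c : F) : ratfun := tofrac (c%:MP : {mpoly F[N]}).

Definition fderiv (k : 'I_N) (f : ratfun) : ratfun :=
  let r := repr f in
  tofrac ((mderiv k (\n_r)) * \d_r - \n_r * (mderiv k (\d_r)))
    / tofrac ((\d_r) ^+ 2).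

(* The (log-canonical) Poisson bracket on F(x) attached to a skew-symmetric
   matrix A: the unique biderivation with {x_i,x_j} = a_ij x_i x_j, i.e.
   {f,g} = sum_{k,l} a_kl x_k x_l (df/dx_k) (dg/dx_l). *)
Definition pbracket (A : 'M[F]_N) (f g : ratfun) : ratfun :=
  \sum_(k < N) \sum_(l < N)
     cst (A k l) * xvar k * xvar l * fderiv k f * fderiv l g.

(* xt solves the Kahan equations (step size 1):
   xt_i - x_i = xt_i * sum_j a_ij x_j + x_i * sum_j a_ij xt_j *)
Definition kahan_eqs (A : 'M[F]_N) (xt : 'I_N -> ratfun) : Prop :=
  forall i : 'I_N,
    xt i - xvar i =
      xt i * (\sum_(j < N) cst (A i j) * xvar j)
      + xvar i * (\sum_(j < N) cst (A i j) * xt j).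

Definition skew_symmetric (A : 'M[F]_N) : Prop := A^T = - A.

Definition kahan_poisson (A : 'M[F]_N) : Prop :=
  exists xt : 'I_N -> ratfun,
    [/\ kahan_eqs A xt,
        (forall yt, kahan_eqs A yt -> yt =1 xt) &
        forall i j : 'I_N, pbracket A (xt i) (xt j) = cst (A i j) * xt i * xt j].

End KahanPoisson.

Definition Gamma (F : fieldType) (n : nat) : 'M[F]_n :=
  \matrix_(i < n, j < n) (if (i < j)%N then 1 else if (j < i)%N then -1 else 0).

(* Vertices of the cloned graph Gamma^w: pairs (i,k) with 1 <= k <= w i
   (k is represented 0-based as an element of 'I_(w i)). *)
Definition clone_vertex (n : nat) (w : 'I_n -> nat) : finType :=
  {i : 'I_n & 'I_(w i)}.

(* Cloning, with the vertex set {(i,k)} enumerated as 'I_#|vertices|: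
   a^w_{(i,k),(j,l)} = a_ij. *)
Definition clone (F : fieldType) (n : nat) (w : 'I_n -> nat) (A : 'M[F]_n)
  : 'M[F]_(#|clone_vertex w|) :=
  \matrix_(u, v) A (tag (enum_val u)) (tag (enum_val v)).

Definition scale_graph (F : fieldType) (N : nat) (g : F) (A : 'M[F]_N) : 'M[F]_N :=
  g *: A.

(* Main.v *)
Require Import Defs.
From HB Require Import structures.
From mathcomp Require Import all_boot all_order all_algebra.
From mathcomp Require Import generic_quotient fraction.
From mathcomp Require Import mpoly.
From mathcomp Require Import complex.
From mathcomp Require Import reals.
From mathcomp Require Import ring zify.
Import GRing.Theory.
Local Open Scope ring_scope.
Set Implicit Arguments.
Unset Strict Implicit.
Unset Printing Implicit Defensive.

Module KP.

Section FracRepr.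
Local Open Scope quotient_scope.
Variable R : idomainType.
Lemma pi_frac (x : {ratio R}) :
  \pi_({fraction R}) x = tofrac (\n_x) / tofrac (\d_x).
Proof.
unlock tofrac.
rewrite -[_^-1]/(FracField.inv _) -[_ * _]/(FracField.mul _ _).
rewrite !piE; apply/eqmodP; rewrite /= FracField.equivfE.
rewrite /FracField.mulf /FracField.invf.
have d0 := denom_ratioP x.
rewrite !numden_Ratio ?oner_neq0 ?mul1r ?mulr1 //.
by rewrite mulrC.
Qed.
Lemma frac_repr (f : {fraction R}) :
  f = tofrac (\n_(repr f)) / tofrac (\d_(repr f)).
Proof. by rewrite -pi_frac reprK. Qed.
End FracRepr.

Lemma ident1 (R : idomainType) (a b p q a' b' p' q' : R) :
  a' * q + a * q' = p' * b + p * b' -> a * q = p * b ->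
  (a' * b - a * b') * q ^+ 2 = (p' * q - p * q') * b ^+ 2.
Proof.
move=> h2 h1.
have -> : (a' * b - a * b') * q ^+ 2 =
  b * q * (a' * q + a * q') - b * q * (p' * b + p * b')
  - (b' * q + b * q') * (a * q) + (b' * q + b * q') * (p * b) + (p' * q - p * q') * b ^+ 2 by ring.
by rewrite h2 h1 subrr sub0r addNr add0r.
Qed.

Section GenField.
Variable (K : fieldType).
Lemma gdiv1 (A B C D : K) : B != 0 -> D != 0 -> A / B + C / D = (A * D + C * B) / (B * D).
Proof. by move=> b0 d0; field; rewrite b0 d0. Qed.
Lemma gdiv2 (A B C D : K) : B != 0 -> D != 0 -> A / B * (C / D) = A * C / (B * D).
Proof. by move=> b0 d0; field; rewrite b0 d0. Qed.
Lemma gdiv3 (A B C D A' B' C' D' : K) : B != 0 -> D != 0 ->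
  ((A' * D + A * D' + (C' * B + C * B')) * (B * D) - (A * D + C * B) * (B' * D + B * D')) / (B * D * (B * D))
  = (A' * B - A * B') / (B * B) + (C' * D - C * D') / (D * D).
Proof. by move=> b0 d0; field; rewrite b0 d0. Qed.
Lemma gdiv4 (A B C D A' B' C' D' : K) : B != 0 -> D != 0 ->
  ((A' * C + A * C') * (B * D) - A * C * (B' * D + B * D')) / (B * D * (B * D))
  = (A' * B - A * B') / (B * B) * (C / D) + A / B * ((C' * D - C * D') / (D * D)).
Proof. by move=> b0 d0; field; rewrite b0 d0. Qed.
End GenField.

Section Deriv.
Variables (F : fieldType) (N : nat).
Local Notation K := (ratfun F N).
Local Notation Pl := {mpoly F[N]}.

Lemma fderiv_frac k (p q : Pl) : q != 0 ->
  fderiv k (tofrac p / tofrac q) =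
  tofrac (mderiv k p * q - p * mderiv k q) / tofrac (q ^+ 2).
Proof.
move=> q0; rewrite /fderiv.
have e := @frac_repr _ (tofrac p / tofrac q : K).
move: e; set r := repr _ => e.
set a := \n_r in e *; set b := \d_r in e *.
have b0 : b != 0 by apply: denom_ratioP.
have h1 : a * q = p * b.
  have bF : tofrac b != 0 :> K by rewrite tofrac_eq0.
  have qF : tofrac q != 0 :> K by rewrite tofrac_eq0.
  have : tofrac a * tofrac q = tofrac p * tofrac b :> K.
    by rewrite -[tofrac a](divfK bF) -e mulrAC divfK.
  by rewrite -!rmorphM => /eqP; rewrite tofrac_eq => /eqP.
have h2 : mderiv k a * q + a * mderiv k q = mderiv k p * b + p * mderiv k b.
  by rewrite -!mderivM h1.
have h1' := congr1 (@tofrac _) h1; have h2' := congr1 (@tofrac _) h2.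
rewrite !rmorphD !rmorphM in h1' h2'.
apply/eqP; rewrite eqr_div ?tofrac_eq0 ?expf_neq0 //.
rewrite !expr2 !rmorphB !rmorphM -!expr2; apply/eqP.
exact: (ident1 h2' h1').
Qed.

Lemma frac_ex (f : K) :
  exists2 ab : Pl * Pl, ab.2 != 0 & f = tofrac ab.1 / tofrac ab.2.
Proof.
exists (\n_(repr f), \d_(repr f)); first exact: denom_ratioP.
by rewrite /= -frac_repr.
Qed.

Lemma tofrac_neq0 (b : Pl) : b != 0 -> tofrac b != 0 :> K.
Proof. by rewrite tofrac_eq0. Qed.

Lemma fderivD (k : 'I_N) (f g : K) : fderiv k (f + g) = fderiv k f + fderiv k g.
Proof.
case: (frac_ex f) => [[a b] /= b0 ->]; case: (frac_ex g) => [[c d] /= d0 ->].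
have bF := tofrac_neq0 b0; have dF := tofrac_neq0 d0.
have -> : tofrac a / tofrac b + tofrac c / tofrac d =
   tofrac (a * d + c * b) / tofrac (b * d) :> K.
  rewrite tofracD !tofracM; move: bF dF.
  move: (tofrac a) (tofrac b) (tofrac c) (tofrac d) => A B C D bF dF.
  exact: (gdiv1 A C bF dF).
rewrite !fderiv_frac ?mulf_neq0 // mderivD !mderivM !expr2.
rewrite !(tofracD, tofracN, tofracM).
move: bF dF; move: (tofrac (mderiv k a)) (tofrac (mderiv k b)) (tofrac (mderiv k c)) (tofrac (mderiv k d)).
move: (tofrac a) (tofrac b) (tofrac c) (tofrac d) => A B C D A' B' C' D' bF dF.
exact: (gdiv3 A C A' B' C' D' bF dF).
Qed.

Lemma fderivM (k : 'I_N) (f g : K) : fderiv k (f * g) = fderiv k f * g + f * fderiv k g.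
Proof.
case: (frac_ex f) => [[a b] /= b0 ->]; case: (frac_ex g) => [[c d] /= d0 ->].
have bF := tofrac_neq0 b0; have dF := tofrac_neq0 d0.
have -> : tofrac a / tofrac b * (tofrac c / tofrac d) =
   tofrac (a * c) / tofrac (b * d) :> K.
  rewrite !tofracM; move: bF dF.
  move: (tofrac a) (tofrac b) (tofrac c) (tofrac d) => A B C D bF dF.
  exact: (gdiv2 A C bF dF).
rewrite !fderiv_frac ?mulf_neq0 // !mderivM !expr2.
rewrite !(tofracD, tofracN, tofracM).
move: bF dF; move: (tofrac (mderiv k a)) (tofrac (mderiv k b)) (tofrac (mderiv k c)) (tofrac (mderiv k d)).
move: (tofrac a) (tofrac b) (tofrac c) (tofrac d) => A B C D A' B' C' D' bF dF.
exact: (gdiv4 A C A' B' C' D' bF dF).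
Qed.

Lemma fderivC (k : 'I_N) (c : F) : fderiv k (cst N c) = 0.
Proof.
have -> : cst N c = tofrac (c%:MP) / tofrac (1%:MP) :> K.
  by rewrite mpolyC1 rmorph1 divr1.
by rewrite fderiv_frac ?mpolyC_eq0 ?oner_neq0 // !mderivC mul0r mulr0 subrr rmorph0 mul0r.
Qed.

Lemma fderivX (k l : 'I_N) : fderiv k (xvar F l) = (l == k)%:R :> K.
Proof.
have -> : xvar F l = tofrac 'X_l / tofrac (1%:MP) :> K.
  by rewrite mpolyC1 rmorph1 divr1.
rewrite fderiv_frac ?mpolyC_eq0 ?oner_neq0 // !mderivC mulr0 subr0.
rewrite mderivX mnm1E mpolyC1 mulr1 expr1n rmorph1 divr1.
case: eqP => [->|_]; last by rewrite scale0r rmorph0.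
have -> : (U_(k) - U_(k))%MM = 0%MM by apply/mnmP => j; rewrite mnmBE subnn mnm0E.
by rewrite mpolyX0 scale1r rmorph1.
Qed.
End Deriv.

Lemma gmulr (R : comRingType) (X a b g h : R) :
  X * (a * h + g * b) = X * a * h + g * (X * b).
Proof. ring. Qed.
Lemma gskew (R : comRingType) (c xk xl a b : R) :
  (- c) * xk * xl * a * b = - (c * xl * xk * b * a).
Proof. ring. Qed.

Section Bracket.
Variables (F : fieldType) (N : nat) (A : 'M[F]_N).
Local Notation K := (ratfun F N).
Local Notation br := (pbracket A).

Lemma cstN (c : F) : cst N (- c) = - cst N c.
Proof. by rewrite /cst mpolyCN tofracN. Qed.

Lemma brDr (f g h : K) : br f (g + h) = br f g + br f h.
Proof.
rewrite /pbracket -big_split; apply: eq_bigr => k _.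
rewrite -big_split; apply: eq_bigr => l _ /=.
by rewrite fderivD mulrDr.
Qed.

Lemma br0r (f : K) : br f 0 = 0.
Proof.
have h := brDr f 0 0; rewrite addr0 in h.
by apply: (addrI (br f 0)); rewrite -h addr0.
Qed.

Lemma brMr (f g h : K) : br f (g * h) = br f g * h + g * br f h.
Proof.
rewrite /pbracket mulr_suml mulr_sumr -big_split; apply: eq_bigr => k _.
rewrite mulr_suml mulr_sumr -big_split; apply: eq_bigr => l _ /=.
by rewrite fderivM gmulr.
Qed.

Lemma brCr (f : K) (c : F) : br f (cst N c) = 0.
Proof.
rewrite /pbracket big1 // => k _; rewrite big1 // => l _.
by rewrite fderivC mulr0.
Qed.

Lemma brX (u v : 'I_N) :
  br (xvar F u) (xvar F v) = cst N (A u v) * xvar F u * xvar F v.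
Proof.
rewrite /pbracket (bigD1 u) //= [X in _ + X]big1; last first.
  move=> k ku; have {}ku : (u == k) = false by apply/negbTE; rewrite eq_sym.
  by rewrite big1 // => l _; rewrite !fderivX ku mulr0 mul0r.
rewrite addr0 (bigD1 v) //= [X in _ + X]big1; last first.
  move=> l lv; have {}lv : (v == l) = false by apply/negbTE; rewrite eq_sym.
  by rewrite !fderivX lv mulr0.
by rewrite !fderivX !eqxx mulr1 mulr1 addr0.
Qed.

Lemma brsum (f : K) (I : Type) (r : seq I) (P : pred I) (G : I -> K) :
  br f (\sum_(i <- r | P i) G i) = \sum_(i <- r | P i) br f (G i).
Proof. exact: (big_morph (br f) (brDr f) (br0r f)). Qed.

Lemma brsk (skA : A^T = - A) (f g : K) : br g f = - br f g.
Proof.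
rewrite /pbracket [in RHS]exchange_big -sumrN; apply: eq_bigr => k _.
rewrite -sumrN; apply: eq_bigr => l _ /=.
have -> : A k l = - A l k.
  by have := congr1 (fun M : 'M[F]_N => M l k) skA; rewrite !mxE.
by rewrite cstN gskew.
Qed.

End Bracket.

Section DerivAlg.
Variables (K : fieldType) (d : K -> K).
Hypothesis dD : forall f h, d (f + h) = d f + d h.
Hypothesis dM : forall f h, d (f * h) = d f * h + f * d h.

Lemma der0 : d 0 = 0.
Proof using dD dM. have h := dD 0 0; rewrite addr0 in h; by apply: (addrI (d 0)); rewrite -h addr0. Qed.

Lemma der1 : d 1 = 0.
Proof using dD dM. have h := dM 1 1; rewrite !mulr1 !mul1r in h; by apply: (addrI (d 1)); rewrite -h addr0. Qed.

Lemma derN f : d (- f) = - d f.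
Proof using dD dM. by apply: (addrI (d f)); rewrite -dD !subrr der0. Qed.

Lemma derB f h : d (f - h) = d f - d h.
Proof using dD dM. by rewrite dD derN. Qed.

Lemma derMn2 f : d (f *+ 2) = d f *+ 2.
Proof using dD dM. by rewrite !mulr2n dD. Qed.

Lemma derV f : d (f^-1) = - d f / f ^+ 2.
Proof using dD dM.
have [->|f0] := eqVneq f 0; first by rewrite invr0 der0 oppr0 mul0r.
have h := dM f f^-1; rewrite mulfV // der1 in h.
have h2 : f * d f^-1 = - (d f / f).
  by apply/eqP; rewrite -addr_eq0 addrC -h.
rewrite -[d f^-1](mulKf f0) h2.
by field.
Qed.
End DerivAlg.

Section Gen.
Variables (K : fieldType) (g : K) (P : nat -> K) (n : nat).

Definition E k := 1 - g * P n + (g * P k) *+ 2.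
Definition Phi i := E 0 * E n / (E i * E i.+1).
Definition dE (d : K -> K) k := g * (d (P k) *+ 2 - d (P n)).
Definition ell (d : K -> K) i :=
  dE d 0 / E 0 + dE d n / E n - dE d i / E i - dE d i.+1 / E i.+1.
Definition lam i a := if (i < a)%N then P a - P i.+1 - P i else - P a.

Section D.
Variables (d : K -> K).
Hypothesis dD : forall f h, d (f + h) = d f + d h.
Hypothesis dM : forall f h, d (f * h) = d f * h + f * d h.
Hypothesis dg : d g = 0.

Lemma dEk k : d (E k) = dE d k.
Proof.
rewrite /E /dE dD (derB dD dM) (der1 dD dM) (derMn2 dD dM) !dM dg !mul0r !add0r.
ring.
Qed.

Lemma dPhi i : E 0 != 0 -> E n != 0 -> E i != 0 -> E i.+1 != 0 ->
  d (Phi i) = Phi i * ell d i.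
Proof.
move=> h0 hn hi hi1.
rewrite /Phi /ell dM (derV dD dM) !dM !dEk.
by field; rewrite h0 hn hi hi1.
Qed.
End D.

Ltac solve_ifs :=
  repeat match goal with
  | |- context [if ?b then _ else _] =>
      first [ rewrite (_ : b = true); last by lia
            | rewrite (_ : b = false); last by lia ]
  end.

Ltac close_nz :=
  repeat (apply/andP; split);
  match goal with
  | H : is_true (?Y != 0) |- is_true (?X != 0) =>
      have -> : X = Y by ring
  end;
  assumption.

Section Poisson.
Variable br : K -> K -> K.
Hypothesis brD : forall f a b, br f (a + b) = br f a + br f b.
Hypothesis brM : forall f a b, br f (a * b) = br f a * b + a * br f b.
Hypothesis brg : forall f, br f g = 0.
Hypothesis brsk : forall f h, br h f = - br f h.
Hypothesis P0 : P 0 = 0.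
Hypothesis brPP : forall a b, br (P a) (P b) =
  g * (if (a <= b)%N then P a * (P b - P a) else - (P b * (P a - P b))).
Hypothesis hE : forall k, (k <= n)%N -> E k != 0.

Lemma L2 h k : (k < n)%N -> br h (Phi k) = Phi k * ell (br h) k.
Proof. move=> kn; apply: dPhi => //; apply: hE; lia. Qed.

Lemma poisson_lt xu xv i j : (i < j)%N -> (j < n)%N ->
  (forall a, br xu (P a) = xu * (g * lam i a)) ->
  (forall a, br xv (P a) = xv * (g * lam j a)) ->
  br xu xv = g * xu * xv ->
  br (xu * Phi i) (xv * Phi j) = g * (xu * Phi i) * (xv * Phi j).
Proof.
move=> ij jn hu hv huv.
have L3 k : br (xu * Phi i) (P k) =
    - (- (xu * (g * lam i k)) * Phi i + xu * (Phi i * ell (br (P k)) i)).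
  by rewrite (brsk (P k) (xu * Phi i)) brM (brsk xu (P k)) hu (L2 (P k) (_ : i < n)%N); last lia.
rewrite brM (brsk xv (xu * Phi i)) brM (brsk xu xv) huv.
rewrite (L2 xv (_ : i < n)%N); last lia.
rewrite (L2 (xu * Phi i) jn).
rewrite /ell /dE !L3 !hv /ell /dE !brPP /lam P0.
have e0 := hE (leq0n n); have en := hE (leqnn n).
have ei : E i != 0 by apply: hE; lia.
have ei1 : E i.+1 != 0 by apply: hE; lia.
have ej : E j != 0 by apply: hE; lia.
have ej1 : E j.+1 != 0 by apply: hE; lia.
move: e0 en ei ei1 ej ej1; rewrite /Phi /E P0.
case: (eqVneq j i.+1) => [eji|jl]; case: (eqVneq n j.+1) => [enj|nl].
- solve_ifs; rewrite (congr1 P enj) (congr1 P eji).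
  by move=> e0 en ei ei1 ej ej1; field; close_nz.
- solve_ifs; rewrite (congr1 P eji).
  by move=> e0 en ei ei1 ej ej1; field; close_nz.
- solve_ifs; rewrite (congr1 P enj).
  by move=> e0 en ei ei1 ej ej1; field; close_nz.
- solve_ifs.
  by move=> e0 en ei ei1 ej ej1; field; close_nz.
Qed.



Lemma poisson_eq xu xv i : (i < n)%N ->
  (forall a, br xu (P a) = xu * (g * lam i a)) ->
  (forall a, br xv (P a) = xv * (g * lam i a)) ->
  br xu xv = 0 ->
  br (xu * Phi i) (xv * Phi i) = 0.
Proof.
move=> iN hu hv huv.
have L3 k : br (xu * Phi i) (P k) =
    - (- (xu * (g * lam i k)) * Phi i + xu * (Phi i * ell (br (P k)) i)).
  by rewrite (brsk (P k) (xu * Phi i)) brM (brsk xu (P k)) hu (L2 (P k) iN).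
rewrite brM (brsk xv (xu * Phi i)) brM (brsk xu xv) huv.
rewrite (L2 xv iN) (L2 (xu * Phi i) iN).
rewrite /ell /dE !L3 !hv /ell /dE !brPP /lam P0.
have e0 := hE (leq0n n); have en := hE (leqnn n).
have ei : E i != 0 by apply: hE; lia.
have ei1 : E i.+1 != 0 by apply: hE; lia.
move: e0 en ei ei1; rewrite /Phi /E P0.
case: (eqVneq n i.+1) => [eni|nl]; case: (eqVneq i 0) => [ei0|inz].
- solve_ifs; rewrite (congr1 P eni) (congr1 P ei0) P0.
  by move=> e0 en ei ei1; field; close_nz.
- solve_ifs; rewrite (congr1 P eni).
  by move=> e0 en ei ei1; field; close_nz.
- solve_ifs; rewrite (congr1 P ei0) P0.
  by move=> e0 en ei ei1; field; close_nz.
- solve_ifs.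
  by move=> e0 en ei ei1; field; close_nz.
Qed.

End Poisson.
End Gen.

Ltac close_nz2 :=
  repeat (apply/andP; split);
  match goal with
  | H : is_true (?Y != 0) |- is_true (?X != 0) =>
      have -> : X = Y by ring
  end;
  assumption.

Ltac leaf_tac := repeat (case: ifP => ?); try (exfalso; lia).

Section Sums.
Variables (K : fieldType) (V : finType) (tau : V -> nat).

Definition Psum (z : V -> K) k := \sum_(v | (tau v < k)%N) z v.
Definition Gm (i j : nat) : K := if (i < j)%N then 1 else if (j < i)%N then -1 else 0.

Lemma Psum0 z : Psum z 0 = 0.
Proof. by rewrite /Psum big_pred0. Qed.

Lemma rowsum (g : K) z (i l : nat) :
  \sum_(v | (tau v < l)%N) (g * Gm i (tau v)) * z v =
  g * (if (i < l)%N then Psum z l - Psum z i.+1 - Psum z i else - Psum z l).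
Proof.
rewrite /Psum !(big_mkcond (fun v => (tau v < _)%N)) /=.
case: ifP => il.
- rewrite -!sumrB mulr_sumr; apply: eq_bigr => v _; rewrite /Gm.
  leaf_tac; ring.
- rewrite -sumrN mulr_sumr; apply: eq_bigr => v _; rewrite /Gm.
  leaf_tac; ring.
Qed.

Lemma group_sum z (h : nat -> K) k :
  \sum_(v | (tau v < k)%N) z v * h (tau v) =
  \sum_(i < k) (Psum z i.+1 - Psum z i) * h i.
Proof.
elim: k => [|k IH]; first by rewrite big_pred0 // big_ord0.
rewrite big_ord_recr /= -IH /Psum !(big_mkcond (fun v => (tau v < _)%N)) /=.
rewrite -sumrB mulr_suml -big_split; apply: eq_bigr => v _ /=.
leaf_tac; try ring.
have -> : tau v = k by lia.
ring.
Qed.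

Lemma telescope (F : nat -> K) k : \sum_(i < k) (F i.+1 - F i) = F k - F 0.
Proof.
elim: k => [|k IH]; first by rewrite big_ord0 subrr.
by rewrite big_ord_recr /= IH; ring.
Qed.
End Sums.

Section Kahan.
Variables (K : fieldType) (V : finType) (tau : V -> nat) (n : nat).
Hypothesis taun : forall v, (tau v < n)%N.
Variables (g : K) (x : V -> K).
Local Notation P := (Psum tau x).
Local Notation EE := (E g P n).

Definition xt u := x u * Phi g P n (tau u).
Definition cc u v := g * Gm K (tau u) (tau v).
Definition KE (y : V -> K) := forall u,
  y u - x u = y u * (\sum_v cc u v * x v) + x u * (\sum_v cc u v * y v).
Definition T k := P k * (1 + g * P n) / EE k.

Hypothesis hE : forall k, (k <= n)%N -> EE k != 0.

Lemma rowfull z u :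
  \sum_v cc u v * z v = g * (Psum tau z n - Psum tau z (tau u).+1 - Psum tau z (tau u)).
Proof.
have -> : \sum_v cc u v * z v = \sum_(v | (tau v < n)%N) (g * Gm K (tau u) (tau v)) * z v.
  by apply: eq_bigl => v; rewrite taun.
by rewrite rowsum taun.
Qed.

Lemma T0 : T 0 = 0.
Proof. by rewrite /T Psum0 !mul0r. Qed.

Lemma Psum_xt k : (k <= n)%N -> Psum tau xt k = T k.
Proof.
move=> kn.
have -> : Psum tau xt k = \sum_(v | (tau v < k)%N) x v * Phi g P n (tau v) by [].
rewrite group_sum.
rewrite (eq_bigr (fun i : 'I_k => T i.+1 - T i)); first by rewrite telescope T0 subr0.
move=> i _; have ik := ltn_ord i.
have e0 := hE (leq0n n); have en := hE (leqnn n).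
have ei : EE i != 0 by apply: hE; lia.
have ei1 : EE i.+1 != 0 by apply: hE; lia.
move: e0 en ei ei1; rewrite /T /Phi /E -/(Psum tau x 0) Psum0 => e0 en ei ei1.
by field; close_nz2.
Qed.

Lemma kahan_ex : KE xt.
Proof.
move=> u; have tu := taun u; rewrite !rowfull !Psum_xt //; try lia.
have e0 := hE (leq0n n); have en := hE (leqnn n).
have ei : EE (tau u) != 0 by apply: hE; have := taun u; lia.
have ei1 : EE (tau u).+1 != 0 by apply: hE; have := taun u; lia.
move: e0 en ei ei1; rewrite /xt /T /Phi /E -/(Psum tau x 0) Psum0 => e0 en ei ei1.
by field; close_nz2.
Qed.

Hypothesis hD : forall i, (i < n)%N -> 1 - g * (P n - P i.+1 - P i) != 0.

Lemma kahan_un y : KE y -> forall u, y u = xt u.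
Proof.
move=> H.
have A k : Psum tau y k - P k = g * (Psum tau y k * P n + P k * Psum tau y n
                                      - (Psum tau y k * P k) *+ 2).
  have S : \sum_(v | (tau v < k)%N) (y v - x v) =
      \sum_(v | (tau v < k)%N) (y v * (g * (P n - P (tau v).+1 - P (tau v)))
         + x v * (g * (Psum tau y n - Psum tau y (tau v).+1 - Psum tau y (tau v)))).
    by apply: eq_bigr => v _; rewrite H !rowfull.
  rewrite sumrB big_split /= in S.
  have G1 := group_sum tau y (fun i => g * (P n - P i.+1 - P i)) k.
  have G2 := group_sum tau x
     (fun i => g * (Psum tau y n - Psum tau y i.+1 - Psum tau y i)) k.
  rewrite /= in G1 G2; rewrite G1 G2 -big_split /= in S.
  have S' : Psum tau y k - P k = \sum_(i < k)
      ((Psum tau y i.+1 - Psum tau y i) * (g * (P n - P i.+1 - P i)) +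
       (P i.+1 - P i) * (g * (Psum tau y n - Psum tau y i.+1 - Psum tau y i))) := S.
  pose Fn i := g * (Psum tau y i * P n + P i * Psum tau y n - (Psum tau y i * P i) *+ 2).
  rewrite S' (eq_bigr (fun i : 'I_k => Fn i.+1 - Fn i)).
    by rewrite telescope /Fn !Psum0; ring.
  by move=> i _; rewrite /Fn; ring.
have Yn : Psum tau y n = P n.
  have h := A n; apply/eqP; rewrite -subr_eq0 h; apply/eqP; ring.
have YT k : (k <= n)%N -> Psum tau y k = T k.
  move=> kn; have ek := hE kn; apply: (mulIf ek); rewrite /T divfK //.
  apply/eqP; rewrite -subr_eq0.
  have -> : Psum tau y k * E g P n k - P k * (1 + g * P n) =
     ((Psum tau y k - P k) - g * (Psum tau y k * P n + P k * Psum tau y n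
                                      - (Psum tau y k * P k) *+ 2)).
    by rewrite /E Yn; ring.
  by rewrite A subrr.
move=> u; have tu := taun u.
have Hu := H u; rewrite !rowfull Yn !YT in Hu; try lia.
have H2 : y u * (1 - g * (P n - P (tau u).+1 - P (tau u))) =
          x u * (1 + g * (P n - T (tau u).+1 - T (tau u))).
  apply/eqP; rewrite -subr_eq0.
  have -> : y u * (1 - g * (P n - P (tau u).+1 - P (tau u))) -
          x u * (1 + g * (P n - T (tau u).+1 - T (tau u))) =
     ((y u - x u) - (y u * (g * (P n - P (tau u).+1 - P (tau u))) +
                       x u * (g * (P n - T (tau u).+1 - T (tau u))))) by ring.
  by rewrite Hu subrr.
have dn := hD tu.
apply: (mulIf dn); rewrite H2.
have e0 := hE (leq0n n); have en := hE (leqnn n).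
have ei : EE (tau u) != 0 by apply: hE; lia.
have ei1 : EE (tau u).+1 != 0 by apply: hE; lia.
move: e0 en ei ei1; rewrite /xt /T /Phi /E -/(Psum tau x 0) Psum0 => e0 en ei ei1.
by field; close_nz2.
Qed.
End Kahan.

Section BrGen.
Variables (K : fieldType) (V : finType) (tau : V -> nat) (x : V -> K) (g : K).
Variable br : K -> K -> K.
Hypothesis brD : forall f a b, br f (a + b) = br f a + br f b.
Hypothesis brsk : forall f h, br h f = - br f h.
Hypothesis brXg : forall u v, br (x u) (x v) = (g * Gm K (tau u) (tau v)) * x u * x v.
Local Notation P := (Psum tau x).

Lemma brg0 f : br f 0 = 0.
Proof. have h := brD f 0 0; rewrite addr0 in h; by apply: (addrI (br f 0)); rewrite -h addr0. Qed.

Lemma brsumr f (I : Type) (r : seq I) (Pr : pred I) (G : I -> K) :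
  br f (\sum_(i <- r | Pr i) G i) = \sum_(i <- r | Pr i) br f (G i).
Proof. exact: (big_morph (br f) (brD f) (brg0 f)). Qed.

Lemma brsuml h (I : Type) (r : seq I) (Pr : pred I) (G : I -> K) :
  br (\sum_(i <- r | Pr i) G i) h = \sum_(i <- r | Pr i) br (G i) h.
Proof.
rewrite brsk brsumr -sumrN; apply: eq_bigr => i _.
by rewrite brsk opprK.
Qed.

Lemma B1 u l : br (x u) (P l) = x u * (g * lam P (tau u) l).
Proof.
rewrite /Psum brsumr (eq_bigr (fun v => x u * ((g * Gm K (tau u) (tau v)) * x v))); last first.
  by move=> v _; rewrite brXg; ring.
by rewrite -mulr_sumr rowsum.
Qed.

Lemma brPPg a b : br (P a) (P b) =
  g * (if (a <= b)%N then P a * (P b - P a) else - (P b * (P a - P b))).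
Proof.
have key c d : (c <= d)%N -> br (P c) (P d) = g * (P c * (P d - P c)).
  move=> cd; rewrite {1}/Psum brsuml.
  rewrite (eq_bigr (fun u => x u * (g * lam P (tau u) d))); last by move=> u _; exact: B1.
  have G := group_sum tau x (fun i => g * lam P i d) c; rewrite /= in G; rewrite G.
  pose Fn i := g * (P i * P d - P i * P i).
  rewrite (eq_bigr (fun i : 'I_c => Fn i.+1 - Fn i)).
    by rewrite telescope /Fn Psum0; ring.
  move=> i _; have ic := ltn_ord i; rewrite /Fn /lam.
  rewrite (_ : (i < d)%N = true); last by lia.
  ring.
case: leqP => ab; first exact: key.
by rewrite brsk key; [ring | lia].
Qed.
End BrGen.

Lemma reN (R : comRingType) (g a b : R) : - (g * b * a) = g * -1 * a * b.
Proof. ring. Qed.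

Section Main.
Variables (F : fieldType) (n : nat) (w : 'I_n -> nat) (g : F).
Local Notation N := #|clone_vertex w|.
Local Notation K := (ratfun F N).
Definition Am := scale_graph g (clone w (Gamma F n)).
Definition tau (u : 'I_N) : nat := tag (enum_val u).
Local Notation x := (@xvar F N).
Local Notation gm := (cst N g).
Local Notation P := (Psum tau x).

Lemma taun u : (tau u < n)%N.
Proof. exact: ltn_ord. Qed.

Lemma AmE u v : Am u v =
  g * (if (tau u < tau v)%N then 1 else if (tau v < tau u)%N then -1 else 0).
Proof. by rewrite /Am /scale_graph /clone !mxE. Qed.

Lemma cstA u v : cst N (Am u v) = gm * Gm K (tau u) (tau v).
Proof.
rewrite AmE /cst mpolyCM tofracM /Gm; case: ifP => _; [|case: ifP => _];
  by rewrite ?mpolyCN ?mpolyC1 ?tofracN ?tofrac1 ?mpolyC0 ?tofrac0.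
Qed.

Lemma skewA : Am^T = - Am.
Proof.
apply/matrixP => u v; rewrite [LHS]mxE [RHS]mxE !AmE.
repeat (case: ifP => ?); try (exfalso; lia);
  by rewrite ?mulr1 ?mulrN1 ?opprK ?mulr0 ?oppr0.
Qed.

Definition lin0 (f : K) :=
  exists p : {mpoly F[N]}, f = tofrac p /\ p.@[fun _ => 0] = 0.

Lemma lin0D f h : lin0 f -> lin0 h -> lin0 (f + h).
Proof.
move=> [p [-> hp]] [q [-> hq]]; exists (p + q).
by rewrite tofracD mevalD hp hq addr0.
Qed.
Lemma lin0N f : lin0 f -> lin0 (- f).
Proof. by move=> [p [-> hp]]; exists (- p); rewrite tofracN mevalN hp oppr0. Qed.
Lemma lin0C c f : lin0 f -> lin0 (cst N c * f).
Proof.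
move=> [p [-> hp]]; exists (c%:MP * p).
by rewrite /cst tofracM mevalM mevalC hp mulr0.
Qed.
Lemma lin0X u : lin0 (x u).
Proof. by exists 'X_u; rewrite mevalXU. Qed.
Lemma lin00 : lin0 0.
Proof. by exists 0; rewrite tofrac0 meval0. Qed.
Lemma lin0P k : lin0 (P k).
Proof. rewrite /Psum; apply: big_ind; [exact: lin00 | exact: lin0D | move=> i _; exact: lin0X]. Qed.
Lemma lin0M2 f : lin0 f -> lin0 (f *+ 2).
Proof. by move=> h; rewrite mulr2n; apply: lin0D. Qed.
Lemma nz_lin0 f : lin0 f -> 1 + f != 0.
Proof.
move=> [p [-> hp]]; rewrite -tofrac1 -tofracD tofrac_eq0; apply/negP => /eqP h.
have := congr1 (meval (fun _ => 0)) h; rewrite mevalD meval1 hp addr0 meval0 => /eqP.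
by rewrite oner_eq0.
Qed.

Lemma hEc k : (k <= n)%N -> E gm P n k != 0.
Proof.
move=> _; rewrite /E -addrA; apply: nz_lin0; apply: lin0D.
  by apply: lin0N; apply: lin0C; apply: lin0P.
by apply: lin0M2; apply: lin0C; apply: lin0P.
Qed.

Lemma hDc i : (i < n)%N -> 1 - gm * (P n - P i.+1 - P i) != 0.
Proof.
move=> _; apply: nz_lin0; apply: lin0N; apply: lin0C.
by apply: lin0D; [apply: lin0D; [apply: lin0P | apply: lin0N; apply: lin0P] | apply: lin0N; apply: lin0P].
Qed.


Local Notation br := (pbracket Am).

Lemma brXgc u v : br (x u) (x v) = (gm * Gm K (tau u) (tau v)) * x u * x v.
Proof. by rewrite brX cstA. Qed.

Lemma brskc (f h : K) : br h f = - br f h.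
Proof. exact: (brsk skewA). Qed.

Lemma brgc (f : K) : br f gm = 0.
Proof. exact: brCr. Qed.

Lemma B1c u l : br (x u) (P l) = x u * (gm * lam P (tau u) l).
Proof. exact: (B1 (@brDr F N Am) brXgc). Qed.

Lemma brPPc a b : br (P a) (P b) =
  gm * (if (a <= b)%N then P a * (P b - P a) else - (P b * (P a - P b))).
Proof. exact: (brPPg (@brDr F N Am) brskc brXgc). Qed.

Lemma Sc z i : \sum_j cst N (Am i j) * z j = \sum_j cc tau gm i j * z j.
Proof. by apply: eq_bigr => j _; rewrite cstA. Qed.

Theorem main_gen : kahan_poisson Am.
Proof.
exists (xt tau n gm x); split.
- move=> i; rewrite !Sc; exact: (kahan_ex taun hEc i).
- move=> y hy u; apply: (kahan_un taun hEc hDc) => i.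
  by rewrite -!Sc; apply: hy.
- move=> u v; rewrite /xt cstA.
  case: (ltngtP (tau u) (tau v)) => h.
  + have huv : br (x u) (x v) = gm * x u * x v.
      by rewrite brXgc /Gm h mulr1.
    rewrite (poisson_lt (@brDr F N Am) (@brMr F N Am) brgc brskc (Psum0 tau x) brPPc
              hEc h (taun v) (B1c u) (B1c v) huv).
    by rewrite /Gm h mulr1.
  + have hvu : br (x v) (x u) = gm * x v * x u.
      by rewrite brXgc /Gm h mulr1.
    rewrite brskc (poisson_lt (@brDr F N Am) (@brMr F N Am) brgc brskc (Psum0 tau x) brPPc
              hEc h (taun u) (B1c v) (B1c u) hvu).
    rewrite /Gm (_ : (tau u < tau v)%N = false); last by lia.
    by rewrite h reN.
  + have huv : br (x u) (x v) = 0.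
      by rewrite brXgc /Gm h ltnn mulr0 !mul0r.
    have hv : forall a, br (x v) (P a) = x v * (gm * lam P (tau u) a).
      by move=> a; rewrite B1c h.
    rewrite -h (poisson_eq (@brDr F N Am) (@brMr F N Am) brgc brskc (Psum0 tau x) brPPc
              hEc (taun u) (B1c u) hv huv).
    by rewrite /Gm ltnn mulr0 !mul0r.
Qed.

End Main.

End KP.

Theorem corollary2p4 (R : realType) :
  (forall (n : nat) (w : 'I_n -> nat) (g : R),
      (0 < n)%N -> (forall i, (0 < w i)%N) -> g != 0 ->
      kahan_poisson (scale_graph g (clone w (Gamma R n))))
  /\
  (forall (n : nat) (w : 'I_n -> nat) (g : R[i]),
      (0 < n)%N -> (forall i, (0 < w i)%N) -> g != 0 ->
      kahan_poisson (scale_graph g (clone w (Gamma R[i] n)))).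
Proof.
split => n w g _ _ _; exact: KP.main_gen.
Qed.
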